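(* Let $\mathcal{X} \subseteq \mathbb{R}^n$ and let $d$ be a distance (metric) on $\mathcal{X}$. Let $\mathcal{P} = \{(x_i, y_i)\}_{i=1}^N$ be a finite labeled training set with $x_i \in \mathcal{X}$, which is linearly separable, and let $L$ be the max-margin linear classifier trained on $\mathcal{P}$. Let $\epsilon > 0$ and suppose that for any two data points $x_i, x_j$ of $\mathcal{P}$, $d(x_i, x_j) > 2\epsilon$ whenever $y_i \neq y_j$. Let $b$ be the nearest-neighbor binarizer $b(x) \in \arg\min_{z \in \mathcal{P}} d(x,z)$ (where $z$ ranges over the data points $x_1,\dots,x_N$), and define the augmented classifier $C(x) = L(b(x))$. Then $C$ is robust over $\mathcal{P}$ with respect to $\epsilon$, and $C$ is exact on the $\epsilon$-neighborhoods of the points of $\mathcal{P}$, i.e. for every $i$ and every $z \in B(x_i,\epsilon)$, $C(z) = y_i$.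
   Context: For $x \in \mathcal{X}$ and $\epsilon>0$, $B(x,\epsilon) = \{z \in \mathcal{X} : d(x,z) \le \epsilon\}$. A function $F$ defined on $\mathcal{X}$ is robust over a subset $\mathcal{Q} \subseteq \mathcal{X}$ with respect to $\epsilon>0$ if for all $x \in \mathcal{Q}$ and all $z \in B(x,\epsilon)$, $F(z) = F(x)$. ''Exact'' means no classification errors. *)

(* Defs.v *)
From HB Require Import structures.
From mathcomp Require Import all_boot all_order all_algebra.
From mathcomp Require Import reals.
Set Implicit Arguments. Unset Strict Implicit. Unset Printing Implicit Defensive.
Import Order.TTheory GRing.Theory Num.Theory.
Local Open Scope ring_scope.

Definition dotv (R : realType) (n : nat) (u v : 'rV[R]_n) : R :=
  \sum_(k < n) u ord0 k * v ord0 k.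

Definition is_metric_on (R : realType) (n : nat)
  (X : 'rV[R]_n -> Prop) (d : 'rV[R]_n -> 'rV[R]_n -> R) : Prop :=
  (forall x y, X x -> X y -> 0 <= d x y) /\
  (forall x y, X x -> X y -> (d x y = 0 <-> x = y)) /\
  (forall x y, X x -> X y -> d x y = d y x) /\
  (forall x y z, X x -> X y -> X z -> d x z <= d x y + d y z).

Definition binary_labels (R : realType) (N : nat) (y : 'I_N -> R) : Prop :=
  forall i, y i = 1 \/ y i = -1.

Definition linearly_separable (R : realType) (n N : nat)
  (xs : 'I_N -> 'rV[R]_n) (y : 'I_N -> R) : Prop :=
  exists (w : 'rV[R]_n) (beta : R), forall i, 0 < y i * (dotv w (xs i) + beta).

Definition margin_feasible (R : realType) (n N : nat)
  (xs : 'I_N -> 'rV[R]_n) (y : 'I_N -> R) (w : 'rV[R]_n) (beta : R) : Prop :=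
  forall i, 1 <= y i * (dotv w (xs i) + beta).

(* (w, beta) is an optimal solution of the hard-margin (max-margin) SVM:
   minimize |w|^2 subject to y_i (w.x_i + beta) >= 1 for all i. *)
Definition is_max_margin (R : realType) (n N : nat)
  (xs : 'I_N -> 'rV[R]_n) (y : 'I_N -> R) (w : 'rV[R]_n) (beta : R) : Prop :=
  margin_feasible xs y w beta /\
  forall w' beta', margin_feasible xs y w' beta' -> dotv w w <= dotv w' w'.

Definition linear_classifier (R : realType) (n : nat) (w : 'rV[R]_n) (beta : R)
  (x : 'rV[R]_n) : R :=
  if 0 <= dotv w x + beta then 1 else -1.

Definition is_nn_binarizer (R : realType) (n N : nat) (X : 'rV[R]_n -> Prop)
  (d : 'rV[R]_n -> 'rV[R]_n -> R) (xs : 'I_N -> 'rV[R]_n)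
  (b : 'rV[R]_n -> 'rV[R]_n) : Prop :=
  forall x, X x -> (exists j, b x = xs j) /\ (forall j, d x (b x) <= d x (xs j)).

Definition ball_in (R : realType) (n : nat) (X : 'rV[R]_n -> Prop)
  (d : 'rV[R]_n -> 'rV[R]_n -> R) (x : 'rV[R]_n) (eps : R) : 'rV[R]_n -> Prop :=
  fun z => X z /\ d x z <= eps.

Definition robust_over (R : realType) (n : nat) (X : 'rV[R]_n -> Prop)
  (d : 'rV[R]_n -> 'rV[R]_n -> R) (F : 'rV[R]_n -> R)
  (Q : 'rV[R]_n -> Prop) (eps : R) : Prop :=
  forall x, Q x -> forall z, ball_in X d x eps z -> F z = F x.

(* Main.v *)
Require Import Defs.
From HB Require Import structures.
From mathcomp Require Import all_boot all_order all_algebra.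
From mathcomp Require Import reals.
Import Order.TTheory GRing.Theory Num.Theory.
Local Open Scope ring_scope.

Theorem theorem1 (R : realType) (n N : nat)
  (X : 'rV[R]_n -> Prop) (d : 'rV[R]_n -> 'rV[R]_n -> R)
  (xs : 'I_N -> 'rV[R]_n) (y : 'I_N -> R)
  (w : 'rV[R]_n) (beta : R) (eps : R) (b : 'rV[R]_n -> 'rV[R]_n) :
  is_metric_on X d ->
  (forall i, X (xs i)) ->
  binary_labels y ->
  linearly_separable xs y ->
  is_max_margin xs y w beta ->
  0 < eps ->
  (forall i j, y i != y j -> 2 * eps < d (xs i) (xs j)) ->
  is_nn_binarizer X d xs b ->
  let C := fun x => linear_classifier w beta (b x) in
  robust_over X d C (fun x => exists i, x = xs i) eps /\
  (forall i z, ball_in X d (xs i) eps z -> C z = y i).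
Proof.
move=> [d0 [dz [dsym dtri]]] Xx ylab _ [feas _] epos sep bnn C.
have Lj : forall j, linear_classifier w beta (xs j) = y j.
  move=> j; have := feas j; rewrite /linear_classifier.
  case: (ylab j) => ->.
    by rewrite mul1r => h; rewrite (le_trans _ h).
  rewrite mulN1r => h; case: ifP => // h0.
  have : 1 <= 0 :> R by apply: (le_trans h); rewrite oppr_le0.
  by rewrite ler10.
have main : forall i z, ball_in X d (xs i) eps z -> C z = y i.
  move=> i z [Xz dle]; have [[j bj] bmin] := bnn z Xz.
  rewrite /C bj Lj.
  case: (eqVneq (y i) (y j)) => [//|/sep hne].
  have h1 : d z (xs j) <= eps.
    rewrite -bj; apply: (le_trans (bmin i)); by rewrite dsym.
  have := dtri _ _ _ (Xx i) Xz (Xx j).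
  have : d (xs i) z + d z (xs j) <= 2 * eps by rewrite mulr2n mulrDl mul1r lerD.
  move=> a1 b1; have := lt_le_trans hne (le_trans b1 a1).
  by rewrite ltxx.
split => //.
move=> x [i ->] z hz; rewrite (main i z hz) (main i (xs i)) //.
split => //; rewrite (proj2 (dz _ _ (Xx i) (Xx i)) erefl); exact: ltW.
Qed.
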